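(* Let $n\ge2$. For any $A,B\in\mathbb{R}^{n\times n}$ there exists a nonzero polynomial $P\in\mathbb{Z}\langle X,Y\rangle$ in two non-commuting variables with $P(A,B)=\mathbf{0}$; i.e. no two real $n\times n$ matrices are algebraically independent over $\mathbb{Z}$.
   Context: $\mathbb{Z}\langle X,Y\rangle$ denotes the ring of polynomials in non-commuting variables $X,Y$ with integer coefficients (finite $\mathbb{Z}$-linear combinations of words in $X,Y$); nonzero means nonzero as a formal polynomial. $P(A,B)$ denotes evaluation by substituting matrices (constant term times $I_n$). $A,B$ are algebraically dependent if some nonzero such $P$ has $P(A,B)=\mathbf{0}$, and algebraically independent otherwise. *)

(* Defs.v *)
From HB Require Import structures.
From mathcomp Require Import all_boot all_order all_algebra.
From mathcomp Require Import Rstruct.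
From Stdlib Require Import Rdefinitions.
Set Implicit Arguments. Unset Strict Implicit. Unset Printing Implicit Defensive.
Import Order.TTheory GRing.Theory Num.Theory.
Local Open Scope ring_scope.

(* Non-commutative polynomials in X, Y over Z: a finite formal Z-linear
   combination of words; a word is a seq bool with true = X, false = Y. *)
Definition ncpoly := seq (int * seq bool).

Definition nccoef (P : ncpoly) (w : seq bool) : int :=
  \sum_(p <- P | p.2 == w) p.1.

Definition ncpoly_nonzero (P : ncpoly) : Prop := exists w, nccoef P w != 0.

Definition word_eval (K : nzRingType) (n : nat) (A B : 'M[K]_n) (w : seq bool)
  : 'M[K]_n := foldr (fun b M => (if b then A else B) *m M) 1%:M w.

Definition nceval (K : nzRingType) (n : nat) (A B : 'M[K]_n) (P : ncpoly)
  : 'M[K]_n := \sum_(p <- P) (p.1%:~R *: word_eval A B p.2).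

(* Main.v *)
Require Import Defs.
From mathcomp Require Import all_boot all_order all_algebra all_fingroup.
From mathcomp Require Import Rstruct.
From Stdlib Require Import Rdefinitions.
Set Implicit Arguments. Unset Strict Implicit. Unset Printing Implicit Defensive.
Import Order.TTheory GRing.Theory Num.Theory.
Local Open Scope ring_scope.

Lemma std_vanish (n' m : nat) (x : 'I_m -> 'M[R]_n'.+1) :
  leq (muln n'.+1 n'.+1).+1 m ->
  \sum_(s : 'S_m) ((-1) ^+ s : R) *: \prod_(k < m) x (s k) = 0.
Proof.
move=> hm.
pose X : 'M[R]_(n'.+1 * n'.+1, m) := \matrix_(a, j) mxvec (x j) 0 a.
pose e (a : 'I_(n'.+1 * n'.+1)) : 'M[R]_n'.+1 := vec_mx (delta_mx 0 a).
have hx j : x j = \sum_a X a j *: e a.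
  rewrite -{1}(mxvecK (x j)) {1}(row_sum_delta (mxvec (x j))) linear_sum.
  by apply: eq_bigr => a _; rewrite linearZ /= mxE.
have hp s : \prod_(k < m) x (s k) =
   \sum_(g : {ffun 'I_m -> 'I_(n'.+1 * n'.+1)})
      (\prod_(k < m) X (g k) (s k)) *: \prod_(k < m) e (g k).
  under eq_bigr do rewrite hx.
  rewrite bigA_distr_bigA /=.
  by apply: eq_bigr => g _; rewrite scaler_prod.
under eq_bigr do rewrite hp scaler_sumr.
rewrite exchange_big /=.
apply: big1 => g _.
under eq_bigr do rewrite scalerA.
rewrite -scaler_suml.
have -> : \sum_(s : 'S_m) (-1) ^+ s * \prod_(k < m) X (g k) (s k) = \det (rowsub g X).
  rewrite /determinant; apply: eq_bigr => s _; congr (_ * _).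
  by apply: eq_bigr => k _; rewrite !mxE.
suff /eqP -> : \det (rowsub g X) == 0 by rewrite scale0r.
apply: contraLR hm => hd.
rewrite -leqNgt.
have : row_free (rowsub g X) by rewrite row_free_unit unitmxE unitfE.
rewrite /row_free => /eqP <-.
apply: leq_trans (mxrankS (rowsub_sub g X)) _.
exact: rank_leq_row.
Qed.

Definition blk (j : nat) : seq bool := true :: nseq j false.

Lemma nseq_inj a b (R1 R2 : seq bool) :
  head true R1 -> head true R2 ->
  nseq a false ++ R1 = nseq b false ++ R2 -> a = b /\ R1 = R2.
Proof.
elim: a b => [|a IH] [|b] /=.
- by move=> _ _ ->.
- by move=> h _ E; rewrite E in h.
- by move=> _ h E; rewrite -E in h.
- by move=> h1 h2 [] /(IH b h1 h2) [-> ->].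
Qed.

Lemma head_flat (s : seq nat) : head true (flatten (map blk s)).
Proof. by case: s. Qed.

Lemma flat_inj (s t : seq nat) :
  flatten (map blk s) = flatten (map blk t) -> s = t.
Proof.
elim: s t => [|a s IH] [|b t] //=.
move=> [] /(nseq_inj (head_flat s) (head_flat t)) [-> /IH ->] //.
Qed.

Lemma word_eval_cat (K : nzRingType) (n : nat) (A B : 'M[K]_n) u v :
  word_eval A B (u ++ v) = word_eval A B u *m word_eval A B v.
Proof.
elim: u => [|b u IH] /=; first by rewrite /word_eval /= mul1mx.
by rewrite /word_eval /= -/(word_eval A B (u ++ v)) IH mulmxA.
Qed.

Lemma word_eval_flat (n' : nat) (A B : 'M[R]_n'.+1) (s : seq nat) :
  word_eval A B (flatten (map blk s)) = \prod_(j <- s) word_eval A B (blk j).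
Proof.
elim: s => [|a s IH]; first by rewrite big_nil.
have -> : flatten (map blk (a :: s)) = blk a ++ flatten (map blk s) by [].
by rewrite word_eval_cat IH big_cons mulmxE.
Qed.

Theorem mainTheorem13 (n : nat) (hn : leq 2 n) (A B : 'M[R]_n) :
  exists P : ncpoly, ncpoly_nonzero P /\ nceval A B P = 0.
Proof.
case: n hn A B => [//|n'] _ A B.
pose m := (muln n'.+1 n'.+1).+1.
pose w (s : 'S_m) := flatten (map blk [seq nat_of_ord (s k) | k <- index_enum 'I_m]).
have winj : injective w.
  move=> s t /flat_inj /eq_in_map h; apply/permP => k; apply: val_inj.
  by apply: h; rewrite mem_index_enum.
exists [seq (((-1) ^+ s : int), w s) | s : 'S_m <- index_enum {perm 'I_m}].
split.
  exists (w 1%g); rewrite /nccoef big_map /=.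
  rewrite (eq_bigl (fun s : 'S_m => s == 1%g)); last by move=> s; rewrite inj_eq.
  by rewrite big_pred1_eq odd_perm1.
rewrite /nceval big_map /=.
rewrite -[RHS](@std_vanish n' m (fun j => word_eval A B (blk j)) (leqnn _)).
apply: eq_bigr => s _.
by rewrite intr_sign word_eval_flat big_map.
Qed.
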